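(* Let $\Omega\subset\mathbb{R}^2$, integers $N,M\ge 1$, a node deployment $\mathbf{P}=(p_1,\dots,p_{N+M})$, a cell partitioning $\mathbf{W}=(W_1,\dots,W_N)$ of $\Omega$ and a normalized flow matrix $\mathbf{S}$ be as described in the context, with flows $F_{i,j}=F_{i,j}(\mathbf{W},\mathbf{S})$ and AP power coefficients $g_n(\mathbf{P},\mathbf{S})$. Then $$\sum_{n=1}^{N}g_n(\mathbf{P},\mathbf{S})\,R_b\int_{W_n}f(\omega)\,d\omega=\sum_{i=1}^{N}\Big[\sum_{j=1}^{N+M}\beta_{i,j}\|p_i-p_j\|^2F_{i,j}(\mathbf{W},\mathbf{S})+\sum_{j=1}^{N}\rho_jF_{i,j}(\mathbf{W},\mathbf{S})\Big].$$
   Context: Let $\Omega\subset\mathbb{R}^2$ be a convex polygon (including its interior). Let $N,M\ge1$ be integers; $\mathcal{I_A}=\{1,\dots,N\}$ indexes access points (APs) and $\mathcal{I_F}=\{N+1,\dots,N+M\}$ indexes fusion centers (FCs). A node deployment is $\mathbf{P}=(p_1,\dots,p_{N+M})$ with $p_n\in\Omega$. Let $f:\Omega\to\mathbb{R}^+$ be continuous and differentiable and let $R_b>0$ be a constant. A cell partitioning $\mathbf{W}=(W_1,\dots,W_N)$ is a partition of $\Omega$ into Borel sets; write $v(W_n)=\int_{W_n}f(\omega)d\omega$. A normalized flow matrix $\mathbf{S}=[s_{i,j}]$, $i\in\mathcal{I_A}$, $j\in\mathcal{I_A}\cup\mathcal{I_F}$, satisfies $s_{i,j}\in[0,1]$,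 $\sum_{j=1}^{N+M}s_{i,j}=1$ for every $i\in\mathcal{I_A}$, and has no cycles: whenever $l_0,\dots,l_K$ satisfy $\prod_{k=1}^K s_{l_{k-1},l_k}>0$ then $s_{l_K,l_0}=0$ (in particular $s_{i,i}=0$). The flows $F_{i,j}(\mathbf{W},\mathbf{S})$ ($i\in\mathcal{I_A}$, $j\in\mathcal{I_A}\cup\mathcal{I_F}$) are the unique numbers with $F_{i,j}=s_{i,j}F_i$, where $F_i=\sum_{j=1}^{N+M}F_{i,j}$ satisfies $F_i=R_b v(W_i)+\sum_{j=1}^N F_{j,i}$. Positive constants $\eta_n$ ($n\in\mathcal{I_A}$), $\beta_{i,j}$ ($i\in\mathcal{I_A}$, $j\in\mathcal{I_A}\cup\mathcal{I_F}$) and nonnegative constants $\rho_n$ ($n\in\mathcal{I_A}$) are given. AP power coefficient: for $n\in\mathcal{I_A}$, consider all directed paths $L: n=l_0\to l_1\to\cdots\to l_J$ with $l_0,\dots,l_{J-1}\in\mathcal{I_A}$, $l_J\in\mathcal{I_F}$ and $\prod_{i=1}^J s_{l_{i-1},l_i}>0$; then $$g_n(\mathbf{P},\mathbf{S})=\sum_{L}\Big[\prod_{i=1}^{J}s_{l_{i-1},l_i}\Big(\sum_{j=1}^{J}\beta_{l_{j-1},l_j}\|p_{l_{j-1}}-p_{l_j}\|^2+\sum_{j=1}^{J-1}\rho_{l_j}\Big)\Big].$$ *)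

(* Defs.v *)
From HB Require Import structures.
From mathcomp Require Import all_boot all_order all_algebra.
From mathcomp Require Import all_classical all_reals all_analysis.
Import Order.TTheory GRing.Theory Num.Theory.
Import numFieldNormedType.Exports.

Set Implicit Arguments.
Unset Strict Implicit.
Unset Printing Implicit Defensive.

Local Open Scope classical_set_scope.
Local Open Scope ring_scope.

(* Nodes are indexed by 'I_(N+M) (0-based): the access points (APs) are
   ap i = i for i : 'I_N, the fusion centers (FCs) are fc k = N + k for k : 'I_M. *)
Definition ap {N M : nat} (i : 'I_N) : 'I_(N + M) := lshift M i.
Definition fc {N M : nat} (k : 'I_M) : 'I_(N + M) := rshift N k.

Definition dist2 {R : realType} (x y : R * R) : R :=
  (x.1 - y.1) ^+ 2 + (x.2 - y.2) ^+ 2.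

Definition conv_hull {R : realType} (V : seq (R * R)) : set (R * R) :=
  [set x | exists lam : 'I_(size V) -> R,
     (forall i, 0 <= lam i) /\ \sum_i lam i = 1 /\
     x.1 = \sum_i lam i * (nth (0, 0) V i).1 /\
     x.2 = \sum_i lam i * (nth (0, 0) V i).2].

Definition convex_polygon {R : realType} (Omega : set (R * R)) : Prop :=
  exists V : seq (R * R), Omega = conv_hull V /\ (interior Omega) !=set0.

Definition leb2 {R : realType} :=
  ((@lebesgue_measure R) \x (@lebesgue_measure R))%E.

Definition vol {R : realType} (f : R * R -> R) (W : set (R * R)) : R :=
  Rintegral leb2 W f.

Definition cell_partition {R : realType} {N : nat} (Omega : set (R * R))
    (W : 'I_N -> set (R * R)) : Prop :=
  (forall n, measurable (W n)) /\
  (forall n m, n != m -> W n `&` W m = set0) /\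
  (\bigcup_n W n = Omega).

Fixpoint pprod {R : realType} {N M : nat} (s : 'I_N -> 'I_(N + M) -> R)
    (x : 'I_N) (ls : seq 'I_N) : R :=
  if ls is y :: t then s x (ap y) * pprod s y t else 1.

Definition normalized_flow_matrix {R : realType} {N M : nat}
    (s : 'I_N -> 'I_(N + M) -> R) : Prop :=
  (forall i j, 0 <= s i j <= 1) /\
  (forall i, \sum_j s i j = 1) /\
  (* no cycles: if prod_{k=1}^K s_{l_{k-1},l_k} > 0 then s_{l_K,l_0} = 0 *)
  (forall (l0 : 'I_N) (ls : seq 'I_N),
      0 < pprod s l0 ls -> s (last l0 ls) (ap l0) = 0).

Definition is_flow {R : realType} {N M : nat} (s : 'I_N -> 'I_(N + M) -> R)
    (Rb : R) (v : 'I_N -> R) (F : 'I_N -> 'I_(N + M) -> R) : Prop :=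
  (forall i j, F i j = s i j * \sum_k F i k) /\
  (forall i, \sum_k F i k = Rb * v i + \sum_(j : 'I_N) F j (ap i)).

(* A directed path n = l_0 -> l_1 -> ... -> l_J with l_0..l_{J-1} APs and
   l_J an FC is encoded as L = (ls, k) with ls = [l_1; ...; l_{J-1}] (APs)
   and l_J = fc k. *)
Definition path_prod {R : realType} {N M : nat} (s : 'I_N -> 'I_(N + M) -> R)
    (n : 'I_N) (L : seq 'I_N * 'I_M) : R :=
  pprod s n L.1 * s (last n L.1) (fc L.2).

Fixpoint pcost {R : realType} {N M : nat} (beta : 'I_N -> 'I_(N + M) -> R)
    (p : 'I_(N + M) -> R * R) (x : 'I_N) (ls : seq 'I_N) : R :=
  if ls is y :: t then
    beta x (ap y) * dist2 (p (ap x)) (p (ap y)) + pcost beta p y t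
  else 0.

Definition path_cost {R : realType} {N M : nat} (beta : 'I_N -> 'I_(N + M) -> R)
    (rho : 'I_N -> R) (p : 'I_(N + M) -> R * R) (n : 'I_N)
    (L : seq 'I_N * 'I_M) : R :=
  pcost beta p n L.1
  + beta (last n L.1) (fc L.2) * dist2 (p (ap (last n L.1))) (p (fc L.2))
  + \sum_(y <- L.1) rho y.

Definition paths_from {R : realType} {N M : nat} (s : 'I_N -> 'I_(N + M) -> R)
    (n : 'I_N) : set (seq 'I_N * 'I_M) :=
  [set L | 0 < path_prod s n L].

(* AP power coefficient g_n(P,S): finitely supported sum over all such paths
   (the set of paths is finite because S has no cycles). *)
Definition g_coef {R : realType} {N M : nat} (s : 'I_N -> 'I_(N + M) -> R)
    (beta : 'I_N -> 'I_(N + M) -> R) (rho : 'I_N -> R)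
    (p : 'I_(N + M) -> R * R) (n : 'I_N) : R :=
  \sum_(L \in paths_from s n) path_prod s n L * path_cost beta rho p n L.

(* Main.v *)
Require Import Defs.
From HB Require Import structures.
From mathcomp Require Import all_boot all_order all_algebra.
From mathcomp Require Import all_classical all_reals all_analysis.
Import Order.TTheory GRing.Theory Num.Theory.
Import numFieldNormedType.Exports.
Local Open Scope classical_set_scope.
Local Open Scope ring_scope.
From mathcomp Require Import ring.

Section Aux.
Variables (R : realType) (N M : nat) (s : 'I_N -> 'I_(N + M) -> R).
Variables (beta : 'I_N -> 'I_(N + M) -> R) (rho : 'I_N -> R)
  (p : 'I_(N + M) -> R * R).
Hypothesis s_ge0 : forall i j, 0 <= s i j.
Hypothesis nocyc : forall (l0 : 'I_N) ls,
  0 < pprod s l0 ls -> s (last l0 ls) (ap l0) = 0.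
Hypothesis rowsum : forall i, \sum_j s i j = 1.

Fixpoint LS (d : nat) : seq (seq 'I_N) :=
  if d is d'.+1 then [::] :: [seq y :: t | y <- index_enum 'I_N, t <- LS d']
  else [::].
Fixpoint lists (d : nat) : seq (seq 'I_N) :=
  if d is d'.+1 then [seq y :: t | y <- index_enum 'I_N, t <- lists d']
  else [:: [::]].

Lemma mem_LS d t : (t \in LS d) = (size t < d)%N.
Proof.
elim: d t => [|d IH] [|y t] //=; rewrite in_cons //=.
apply/allpairsP/idP => [[[y' t'] [_ /= H [_ ->]]]|H].
  by rewrite /= ltnS -IH.
by exists (y, t); rewrite mem_index_enum IH -ltnS.
Qed.

Lemma size_lists d t : t \in lists d -> size t = d.
Proof.
elim: d t => [|d IH] t /=; first by rewrite inE => /eqP ->.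
by case/allpairsP => [[y t'] [_ /= /IH H ->]] /=; rewrite H.
Qed.

Lemma uniq_LS d : uniq (LS d).
Proof.
elim: d => [|d IH] //=; apply/andP; split.
  by apply/negP => /allpairsP [[y t] [_ _]].
apply: allpairs_uniq => //; first exact: index_enum_uniq.
by move=> [a b] [c d'] _ _ /= [-> ->].
Qed.

Lemma big_LS d (H : seq 'I_N -> R) :
  \sum_(t <- LS d.+1) H t = H [::] + \sum_y \sum_(t <- LS d) H (y :: t).
Proof. by rewrite /= big_cons big_allpairs_dep. Qed.

Lemma big_lists d (H : seq 'I_N -> R) :
  \sum_(t <- lists d.+1) H t = \sum_y \sum_(t <- lists d) H (y :: t).
Proof. by rewrite /= big_allpairs_dep. Qed.

Lemma pprod_ge0 x t : 0 <= pprod s x t.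
Proof. by elim: t x => [|y t IH] x //=; rewrite mulr_ge0. Qed.

Lemma pprod_cat x a b :
  pprod s x (a ++ b) = pprod s x a * pprod s (last x a) b.
Proof. by elim: a x => [|y a IH] x /=; rewrite ?mul1r // IH mulrA. Qed.

Lemma posM {a b : R} : 0 <= a -> 0 <= b -> 0 < a * b -> 0 < a /\ 0 < b.
Proof.
move=> ha hb; rewrite lt0r mulf_eq0 negb_or => /andP[/andP[a0 b0] _].
by rewrite !lt0r a0 b0 ha hb.
Qed.

Lemma pprod_uniq x t : 0 < pprod s x t -> uniq (x :: t).
Proof.
elim: t x => [|y t IH] x // H.
have [_ ht] := posM (s_ge0 _ _) (pprod_ge0 _ _) H.
have uyt := IH y ht.
rewrite /= in uyt *; rewrite uyt andbT.
apply/negP => xin.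
move: H; case/splitPr: xin => u w H.
rewrite pprod_cat /= in H.
have [hu hw] := posM (pprod_ge0 _ _) (mulr_ge0 (s_ge0 _ _) (pprod_ge0 _ _)) H.
have [hs _] := posM (s_ge0 _ _) (pprod_ge0 _ _) hw.
by move: hs; rewrite (nocyc _ _ hu) ltxx.
Qed.

Lemma pprod_size x t : 0 < pprod s x t -> (size t < N)%N.
Proof.
move/pprod_uniq/card_uniqP => H.
have := max_card (mem (x :: t)); rewrite card_ord.
by move: H; rewrite /= => <-.
Qed.

Lemma Pp0 d n : (N <= d)%N -> \sum_(t <- lists d) pprod s n t = 0.
Proof.
move=> Nd; rewrite big_seq big1 // => t /size_lists sz.
have := pprod_ge0 n t; rewrite le0r => /orP[/eqP //|/pprod_size].
by rewrite sz ltnNge Nd.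
Qed.

Lemma path_prod_cons n y t k :
  path_prod s n (y :: t, k) = s n (ap y) * path_prod s y (t, k).
Proof. by rewrite /path_prod /= mulrA. Qed.

Lemma path_prod_nil n k : path_prod s n ([::], k) = s n (fc k).
Proof. by rewrite /path_prod /= mul1r. Qed.

Lemma path_cost_cons n y t k :
  path_cost beta rho p n (y :: t, k) =
  beta n (ap y) * dist2 (p (ap n)) (p (ap y)) + rho y
  + path_cost beta rho p y (t, k).
Proof. rewrite /path_cost /= big_cons; ring. Qed.

Lemma path_cost_nil n k :
  path_cost beta rho p n ([::], k) = beta n (fc k) * dist2 (p (ap n)) (p (fc k)).
Proof. by rewrite /path_cost /= big_nil add0r addr0. Qed.

Definition Pd d n := \sum_(t <- LS d) \sum_k path_prod s n (t, k).
Definition Gd d n := \sum_(t <- LS d) \sum_k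
  path_prod s n (t, k) * path_cost beta rho p n (t, k).

Lemma split_row (H : 'I_(N + M) -> R) :
  \sum_j H j = \sum_y H (ap y) + \sum_k H (fc k).
Proof. by rewrite big_split_ord. Qed.

Lemma Pd_Pp d n : Pd d n + \sum_(t <- lists d) pprod s n t = 1.
Proof.
elim: d n => [|d IH] n.
  by rewrite /Pd /= big_nil big_cons big_nil /= add0r addr0.
rewrite /Pd big_LS big_lists -(rowsum n) split_row -addrA [RHS]addrC.
congr (_ + _).
  by apply: eq_bigr => k _; rewrite path_prod_nil.
rewrite -big_split /=; apply: eq_bigr => y _.
rewrite -[RHS]mulr1 -(IH y) mulrDr /Pd !mulr_sumr; congr (_ + _).
apply: eq_bigr => t _; rewrite mulr_sumr; apply: eq_bigr => k _.
by rewrite path_prod_cons.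
Qed.

Lemma Pd1 d n : (N <= d)%N -> Pd d n = 1.
Proof. by move=> Nd; have := Pd_Pp d n; rewrite Pp0 // addr0. Qed.


Lemma Gd_step d n : Gd d.+1 n =
  \sum_k s n (fc k) * (beta n (fc k) * dist2 (p (ap n)) (p (fc k)))
  + \sum_y s n (ap y) * ((beta n (ap y) * dist2 (p (ap n)) (p (ap y)) + rho y)
                        * Pd d y + Gd d y).
Proof.
rewrite /Gd big_LS; congr (_ + _).
  by apply: eq_bigr => k _; rewrite path_prod_nil path_cost_nil.
apply: eq_bigr => y _.
rewrite /Pd mulrDr mulrA !mulr_sumr -big_split /=; apply: eq_bigr => t _.
rewrite !mulr_sumr -big_split; apply: eq_bigr => k _.
rewrite path_prod_cons path_cost_cons; rewrite -[RHS]/(_ + _ : R); ring.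
Qed.

Lemma g_Gd d n : (N <= d)%N -> g_coef s beta rho p n = Gd d n.
Proof.
move=> Nd; rewrite /g_coef.
rewrite (fsbig_fwiden [seq (t, k) | t <- LS d, k <- index_enum 'I_M]).
- by rewrite big_allpairs_dep.
- move=> [t k] /= H; apply/allpairsP; exists (t, k); split => //=.
    rewrite mem_LS; apply: leq_trans Nd; apply: (@pprod_size n).
    by have [] := posM (pprod_ge0 _ _) (s_ge0 _ _) H.
  exact: mem_index_enum.
- apply: allpairs_uniq; [exact: uniq_LS|exact: index_enum_uniq|].
  by move=> [a b] [c e] _ _ /= [-> ->].
- move=> [t k] [_ /= H] /=.
  have := mulr_ge0 (pprod_ge0 n t) (s_ge0 (last n t) (fc k)).
  rewrite le0r => /orP[/eqP E|//].
  by rewrite /path_prod /= E mul0r.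
Qed.

Lemma g_rec n : g_coef s beta rho p n =
  \sum_k s n (fc k) * (beta n (fc k) * dist2 (p (ap n)) (p (fc k)))
  + \sum_y s n (ap y) * (beta n (ap y) * dist2 (p (ap n)) (p (ap y)) + rho y
                        + g_coef s beta rho p y).
Proof.
rewrite (g_Gd N.+1 n) // Gd_step; congr (_ + _).
apply: eq_bigr => y _; rewrite (Pd1 N y) // mulr1 (g_Gd N y) //.
Qed.

End Aux.
Theorem lemma1 (R : realType) (Omega : set (R * R)) (N M : nat)
    (p : 'I_(N + M) -> R * R) (f : R * R -> R) (Rb : R)
    (W : 'I_N -> set (R * R)) (s : 'I_N -> 'I_(N + M) -> R)
    (beta : 'I_N -> 'I_(N + M) -> R) (rho : 'I_N -> R)
    (F : 'I_N -> 'I_(N + M) -> R) :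
  convex_polygon Omega ->
  (0 < N)%N -> (0 < M)%N ->
  (forall n, p n \in Omega) ->
  (forall x, x \in Omega -> 0 < f x) ->
  {within Omega, continuous f} ->
  (forall x, x \in Omega -> differentiable f x) ->
  0 < Rb ->
  cell_partition Omega W ->
  normalized_flow_matrix s ->
  (forall i j, 0 < beta i j) ->
  (forall n, 0 <= rho n) ->
  is_flow s Rb (fun n => vol f (W n)) F ->
  \sum_(n < N) g_coef s beta rho p n * (Rb * vol f (W n)) =
  \sum_(i < N) (\sum_(j < N + M) beta i j * dist2 (p (ap i)) (p j) * F i j
                + \sum_(j < N) rho j * F i (ap j)).
Proof.
move=> _ _ _ _ _ _ _ _ _ [hs [rows nc]] _ _ [HF1 HF2].
have s_ge0 i j : 0 <= s i j by case/andP: (hs i j).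
have grec := @g_rec R N M s beta rho p s_ge0 nc rows.
have RbV n : Rb * vol f (W n) =
    \sum_k F n k - \sum_j s j (ap n) * \sum_k F j k.
  have -> : \sum_j s j (ap n) * \sum_k F j k = \sum_j F j (ap n).
    by apply: eq_bigr => j _; rewrite -HF1.
  by rewrite HF2 addrK.
transitivity (\sum_i (\sum_k F i k) *
  (\sum_j s i j * (beta i j * dist2 (p (ap i)) (p j))
   + \sum_y s i (ap y) * rho y)).
  rewrite (eq_bigr (fun n => g_coef s beta rho p n * \sum_k F n k
     - \sum_j g_coef s beta rho p n * (s j (ap n) * \sum_k F j k))); last first.
    by move=> n _; rewrite RbV mulrBr; congr (_ - _); exact: mulr_sumr.
  rewrite sumrB exchange_big /= -sumrB; apply: eq_bigr => i _.
  rewrite grec (@split_row R N M (fun j => s i j * (beta i j * dist2 (p (ap i)) (p j)))) /=.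
  have E : \sum_y s i (ap y) * (beta i (ap y) * dist2 (p (ap i)) (p (ap y))
             + rho y + g_coef s beta rho p y)
         = \sum_y s i (ap y) * (beta i (ap y) * dist2 (p (ap i)) (p (ap y)))
           + \sum_y s i (ap y) * rho y
           + \sum_y g_coef s beta rho p y * s i (ap y).
    rewrite -!big_split; apply: eq_bigr => y _ /=; ring.
  have E2 : \sum_n g_coef s beta rho p n * (s i (ap n) * \sum_k F i k)
          = (\sum_n g_coef s beta rho p n * s i (ap n)) * \sum_k F i k.
    by rewrite mulr_suml; apply: eq_bigr => n _; rewrite mulrA.
  rewrite E E2; ring.
apply: eq_bigr => i _; rewrite mulrDr !mulr_sumr.
congr (_ + _); apply: eq_bigr => j _; rewrite HF1; ring.
Qed.
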